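(* Let $(k_n)$ be a nondecreasing integer sequence, $(V^*_n)$ vertices of interest, and $\mathbf{\Phi}=(\Phi_n)$ a VN rule, and let $h_{\Phi_n}(g_1,\mathfrak{o}_n(g_2),V^*_n)=\sum_{v\in V^*_n}\mathbf{1}\{\mathrm{rank}_{\Phi_n(g_1,\mathfrak{o}_n(g_2),V^*_n)}(\mathfrak{o}_n(v))\le k_n\}$. Let $(\hat h_{\Phi_n})_n$ be any sequence of label-agnostic estimators of $(h_{\Phi_n})_n$, i.e. satisfying $\hat h_{\Phi_n}(g_1,\mathfrak{o}_n(g_2),V^*_n)=\hat h_{\Phi_n}(g_1,\mathfrak{o}_n(g_2'),V^*_n)$ whenever $g_2\simeq g_2'$ (graph isomorphism). Then there exist sequences of nested-core nominatable distributions $\mathbf{F}=(F_n)$ and $\mathbf{F}'=(F_n')$ such that for all $n$ sufficiently large, if $(G_1,G_2)\sim F_n$ and $(G_1',G_2')\sim F_n'$, then $d_{\mathrm{TV}}\big(\mathcal{L}(h_{\Phi_n}(G_1,\mathfrak{o}(G_2),V^*_n)),\mathcal{L}(h_{\Phi_n}(G_1',\mathfrak{o}(G_2'),V^*_n))\big)>0$, while $\mathcal{L}(\hat h_{\Phi_n}(G_1,\mathfrak{o}(G_2),V^*_n))=\mathcal{L}(\hat h_{\Phi_n}(G_1',\mathfrak{o}(G_2'),V^*_n))$.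
   Context: $\mathcal{L}(X)$ denotes the law of $X$ and $d_{\mathrm{TV}}$ total variation distance. $\mathcal{G}_n$ denotes labeled graphs on $n$ vertices. A nominatable distribution of order $(n,m)$ is a distribution on $\mathcal{G}_n\times\mathcal{G}_m$ with vertex sets $V_1=\{v_1,\dots,v_n\}$, $V_2=\{u_1,\dots,u_m\}$, $v_i=u_i$ for $i\le c$ (core $C$), disjoint junk sets $J_1=V_1\setminus C$, $J_2=V_2\setminus C$, and $G_1[J_1]$, $G_2[J_2]$ conditionally independent given the parameter. A sequence of such distributions has nested cores if eventually the vertex sets of the first graphs, of the second graphs, and the cores are increasing in $n$. An obfuscating function is a bijection $\mathfrak{o}$ from $V_2$ onto a set $W$ disjoint from $V_1,V_2$. For $u\in V(g)$, $\mathcal{I}(u;g)$ is the orbit of $u$ under automorphisms of $g$. A VN scheme $\Phi_n$ maps $(g_1,\mathfrak{o}(g_2),V^* )$ with $V^*\subset V_1$ to a total ordering of $W$, such that the set of positions of $\mathfrak{o}(\mathcal{I}(u;g_2))$ does not depend on the choice of obfuscating function $\mathfrak{o}$ (for every $g_1,g_2,V^*,u$); $\mathrm{rank}(\cdot)$ denotes position in this ordering. A VN rule is a sequence of VN schemes. *)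

(* Defs.v *)
From HB Require Import structures.
From mathcomp Require Import all_boot all_order all_algebra.
From mathcomp Require Import fingroup perm reals.
Set Implicit Arguments. Unset Strict Implicit. Unset Printing Implicit Defensive.
Import Order.TTheory GRing.Theory Num.Theory.
Local Open Scope ring_scope.

(* A labeled simple graph on the vertex set 'I_n (vertex i stands for v_(i+1)),
   given by its (symmetric, irreflexive) set of ordered adjacent pairs. *)
Definition is_graph n (E : {set 'I_n * 'I_n}) : bool :=
  [forall i, forall j, ((i, j) \in E) == ((j, i) \in E)] &&
  [forall i, (i, i) \notin E].

Definition graph n := {E : {set 'I_n * 'I_n} | is_graph E}.

Definition relabel_set n (s : {perm 'I_n}) (E : {set 'I_n * 'I_n}) :
  {set 'I_n * 'I_n} := [set e | ((s^-1)%g e.1, (s^-1)%g e.2) \in E].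

Lemma relabel_is_graph n (s : {perm 'I_n}) (E : {set 'I_n * 'I_n}) :
  is_graph E -> is_graph (relabel_set s E).
Proof.
case/andP=> /forallP Hs /forallP Hi; apply/andP; split.
  apply/forallP=> i; apply/forallP=> j; rewrite !inE /=.
  exact: (forallP (Hs _)).
by apply/forallP=> i; rewrite inE /=; apply: Hi.
Qed.

Definition relabel n (s : {perm 'I_n}) (g : graph n) : graph n :=
  exist _ (relabel_set s (val g)) (relabel_is_graph s (valP g)).

Definition isomorphic n (g g' : graph n) : Prop :=
  exists s : {perm 'I_n}, relabel s g = g'.

Definition aut_orbit n (u : 'I_n) (g : graph n) : {set 'I_n} :=
  [set w | [exists a : {perm 'I_n}, (relabel a g == g) && (a u == w)]].

(* Obfuscating functions V2 -> W are represented by permutations o of 'I_m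
   (W is an abstract copy of 'I_m, disjoint from V1, V2); o(g2) = relabel o g2.
   A total ordering of W is a permutation p : position of w is (p w) + 1. *)
Definition VN_scheme n m
  (Phi : graph n -> graph m -> {set 'I_n} -> {perm 'I_m}) : Prop :=
  forall (g1 : graph n) (g2 : graph m) (Vs : {set 'I_n}) (u : 'I_m)
         (o o' : {perm 'I_m}),
    [set Phi g1 (relabel o g2) Vs (o w) | w in aut_orbit u g2] =
    [set Phi g1 (relabel o' g2) Vs (o' w) | w in aut_orbit u g2].

(* h_Phi(g1, o(g2), Vstar) = sum_{v in Vstar} 1{ rank(o(v)) <= k }; a core vertex
   v = v_i of V1 is the vertex u_i of V2 (same index). *)
Definition hPhi n m (Phi : graph n -> graph m -> {set 'I_n} -> {perm 'I_m})
  (k : nat) (g1 : graph n) (g2 : graph m) (o : {perm 'I_m}) (Vs : {set 'I_n})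
  : nat :=
  #|[set v in Vs | [exists w : 'I_m,
       (val w == val v) && ((Phi g1 (relabel o g2) Vs (o w)).+1 <= k)%N]]|.

Definition label_agnostic n m (T : Type)
  (hh : graph n -> graph m -> {set 'I_n} -> T) : Prop :=
  forall (g1 : graph n) (g2 g2' : graph m) (Vs : {set 'I_n}) (o : {perm 'I_m}),
    isomorphic g2 g2' -> hh g1 (relabel o g2) Vs = hh g1 (relabel o g2') Vs.

(* V1 = {v_1..v_n} is encoded by the labels 0..n-1 (a label universe nat);
   V2 = {u_1..u_m} has labels lab : 'I_m -> nat; core C = first c vertices. *)
Definition core n (c : nat) : {set 'I_n} := [set i : 'I_n | (i < c)%N].
Definition junk n (c : nat) : {set 'I_n} := [set i : 'I_n | (c <= i)%N].

Definition induced n (J : {set 'I_n}) (g : graph n) : {set 'I_n * 'I_n} :=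
  [set e in val g | (e.1 \in J) && (e.2 \in J)].

Definition is_distr (R : realType) (X : finType) (P : {ffun X -> R}) : Prop :=
  (forall x, 0 <= P x) /\ \sum_x P x = 1.

Definition nominatable (R : realType) n m (c : nat) (lab : 'I_m -> nat)
  (P : {ffun graph n * graph m -> R}) : Prop :=
  [/\ (c <= n)%N /\ (c <= m)%N,
      injective lab,
      (forall i : 'I_m, (i < c)%N -> lab i = i),
      (forall i : 'I_m, (c <= i)%N -> (n <= lab i)%N) /\
      is_distr P &
      forall A B,
        \sum_(x | (induced (junk n c) x.1 == A) && (induced (junk m c) x.2 == B)) P x
        = (\sum_(x | induced (junk n c) x.1 == A) P x) *
          (\sum_(x | induced (junk m c) x.2 == B) P x)].

Definition nested_nominatable (R : realType) (m c : nat -> nat)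
  (lab : forall n, 'I_(m n) -> nat)
  (P : forall n, {ffun graph n * graph (m n) -> R}) : Prop :=
  (forall n, nominatable (c n) (lab n) (P n)) /\
  exists N, forall n, (N <= n)%N ->
    (c n <= c n.+1)%N /\
    (forall i : 'I_(m n), exists j : 'I_(m n.+1), lab n.+1 j = lab n i).

Definition law (R : realType) (X : finType) (Y : eqType) (P : {ffun X -> R})
  (f : X -> Y) (y : Y) : R := \sum_(x | f x == y) P x.

Definition dTV (R : realType) (X X' : finType) (Y : eqType)
  (P : {ffun X -> R}) (f : X -> Y) (P' : {ffun X' -> R}) (f' : X' -> Y) : R :=
  2^-1 * \sum_(y <- undup ([seq f x | x <- enum X] ++ [seq f' x | x <- enum X']))
           `|law P f y - law P' f' y|.

(* Main.v *)
Require Import Defs.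
From HB Require Import structures.
From mathcomp Require Import all_boot all_order all_algebra.
From mathcomp Require Import fingroup perm reals.
From mathcomp Require Import zify.
Import Order.TTheory GRing.Theory Num.Theory.


Lemma relabel1 n (g : graph n) : relabel 1 g = g.
Proof.
apply: val_inj => /=; apply/setP => e; rewrite /relabel_set inE invg1 !perm1.
by case: e.
Qed.

Lemma relabelM n (s o : {perm 'I_n}) g :
  relabel o (relabel s g) = relabel (s * o) g.
Proof.
by apply: val_inj => /=; apply/setP => e; rewrite /relabel_set !inE /= invMg !permM.
Qed.

Lemma relabel_adj n (a : {perm 'I_n}) (g : graph n) u w :
  relabel a g = g -> ((a u, a w) \in val g) = ((u, w) \in val g).
Proof.
move=> H; rewrite -{1}H /= /relabel_set inE /= !permK //.
Qed.

Definition adjR {m : nat} (i j : 'I_m) : bool :=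
  (((i < j) && (((j : nat).+1 == m) != ((j : nat) == (i : nat).+1))) ||
  ((j < i) && (((i : nat).+1 == m) != ((i : nat) == (j : nat).+1))))%N.

Definition GE m : {set 'I_m * 'I_m} := [set e | adjR e.1 e.2].

Lemma GE_graph m : is_graph (GE m).
Proof.
apply/andP; split.
  apply/forallP=> i; apply/forallP=> j; rewrite !inE /adjR /=.
  by rewrite orbC.
by apply/forallP=> i; rewrite inE /adjR /= ltnn.
Qed.

Definition Gr m : graph m := exist _ (GE m) (GE_graph m).

Definition nbr {m} (u : 'I_m) : {set 'I_m} := [set w | adjR u w].

Lemma card_val_in m (s : seq nat) :
  (#|[set w : 'I_m | (w : nat) \in s]| <= size s)%N.
Proof.
have -> : [set w : 'I_m | (w : nat) \in s] = [set w | w \in pmap insub s].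
  by apply/setP => w; rewrite !inE mem_pmap_sub.
rewrite cardsE (leq_trans (card_size _)) // size_pmap_sub count_size //.
Qed.

Lemma card_val_in_ge m (s : seq nat) : uniq s -> all (fun x => x < m)%N s ->
  (size s <= #|[set w : 'I_m | (w : nat) \in s]|)%N.
Proof.
move=> us als.
have -> : [set w : 'I_m | (w : nat) \in s] = [set w | w \in pmap insub s].
  by apply/setP => w; rewrite !inE mem_pmap_sub.
rewrite cardsE.
have : uniq (pmap (insub : nat -> option 'I_m) s) by exact: pmap_sub_uniq.
move/card_uniqP => ->.
by rewrite size_pmap_sub; move: als; rewrite all_count => /eqP ->.
Qed.

Lemma adj_aut m (a : {perm 'I_m}) u w :
  relabel a (Gr m) = Gr m -> adjR (a u) (a w) = adjR u w.
Proof. by move=> H; have := @relabel_adj _ a _ u w H; rewrite /= !inE. Qed.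

Lemma nbr_card_aut m (a : {perm 'I_m}) u :
  relabel a (Gr m) = Gr m -> #|nbr (a u)| = #|nbr u|.
Proof.
move=> H; rewrite -(card_preimset _ (@perm_inj _ a)); 
by apply: eq_card => w; rewrite !inE adj_aut.
Qed.

Lemma deg_L m (v : 'I_m) : (6 <= m)%N -> (v : nat) = m - 2 -> (#|nbr v| <= 1)%N.
Proof.
move=> Hm Hv; apply: leq_trans (card_val_in m [:: m - 3]).
apply: subset_leq_card; apply/subsetP => w; rewrite !inE /adjR.
move: (ltn_ord w) (ltn_ord v) => *; lia.
Qed.

Lemma deg_low m (v : 'I_m) : (6 <= m)%N -> ((v : nat) <= m - 3)%N -> (2 <= #|nbr v|)%N.
Proof.
move=> Hm Hv; apply: leq_trans (card_val_in_ge m [:: ((v : nat)).+1; m - 1] _ _) _.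
- by rewrite /= inE andbT; lia.
- by rewrite /=; apply/and3P; split; lia.
apply: subset_leq_card; apply/subsetP => w; rewrite !inE /adjR.
move: (ltn_ord w) (ltn_ord v) => *; lia.
Qed.

Lemma deg_M m (v : 'I_m) : (6 <= m)%N -> (v : nat) = m - 1 -> (4 <= #|nbr v|)%N.
Proof.
move=> Hm Hv; apply: leq_trans (card_val_in_ge m [:: 0; 1; 2; 3]%N _ _) _ => //.
- by rewrite /=; apply/and5P; split; lia.
apply: subset_leq_card; apply/subsetP => w; rewrite !inE /adjR.
move: (ltn_ord w) (ltn_ord v) => *; lia.
Qed.

Lemma deg_notM m (v : 'I_m) : (6 <= m)%N -> (v : nat) != m - 1 -> (#|nbr v| <= 3)%N.
Proof.
move=> Hm Hv; apply: leq_trans (card_val_in m [:: ((v : nat)).-1; ((v : nat)).+1; m - 1]).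
apply: subset_leq_card; apply/subsetP => w; rewrite !inE /adjR.
move: (ltn_ord w) (ltn_ord v) => *; lia.
Qed.

Lemma rigid m (a : {perm 'I_m}) : (6 <= m)%N -> relabel a (Gr m) = Gr m ->
  forall v, a v = v.
Proof.
move=> Hm H.
have degA u : #|nbr (a u)| = #|nbr u| by exact: nbr_card_aut.
have fixM (v : 'I_m) : (v : nat) = m - 1 -> a v = v.
  move=> Hv; apply/eqP; apply: contraT => Hn.
  have Hn' : (a v : nat) != m - 1 by rewrite -Hv.
  have := @deg_notM _ (a v) Hm Hn'; rewrite degA.
  by have := @deg_M _ v Hm Hv; lia.
have fixL (v : 'I_m) : (v : nat) = m - 2 -> a v = v.
  move=> Hv; apply/eqP; apply: contraT => Hn.
  have HL := @deg_L _ v Hm Hv; rewrite -degA in HL.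
  have Hne : (a v : nat) != m - 2 by rewrite -Hv.
  case: (ltnP (a v : nat) (m - 2)) => Hav.
    have Hl : ((a v : nat) <= m - 3)%N by lia.
    by have := @deg_low _ _ Hm Hl; lia.
  have Hav' : (a v : nat) = m - 1 by move: (ltn_ord (a v)) Hne; lia.
  by have := @deg_M _ _ Hm Hav'; lia.
have step d : forall v : 'I_m, (m - 2 - d <= (v : nat))%N -> a v = v.
  elim: d => [|d IH] v Hv.
    case: (ltnP ((v : nat)) (m - 1)) => Hv2.
      by apply: fixL; lia.
    by apply: fixM; move: (ltn_ord v); lia.
  case: (leqP (m - 2 - d) ((v : nat))) => Hv2; first exact: IH.
  have Hu : (((v : nat)).+1 < m)%N by lia.
  pose u := Ordinal Hu.
  have Hau : a u = u by apply: IH => /=; lia.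
  have Huv : adjR u v by rewrite /adjR /=; move: (ltn_ord v); lia.
  have Hua : adjR u (a v) by rewrite -Hau adj_aut.
  have Hle : ((a v : nat) <= (v : nat))%N.
    rewrite leqNgt; apply/negP => Hgt.
    have Hf : a (a v) = a v by apply: IH; lia.
    by move/perm_inj: Hf => Hf; rewrite Hf ltnn in Hgt.
  apply: val_inj; move: Hua Hle; rewrite /adjR /=; move: (ltn_ord (a v)); lia.
move=> v; apply: (step m); lia.
Qed.

Section P3.
Local Open Scope group_scope.

Lemma orbit_Gr m u : (6 <= m)%N -> aut_orbit u (Gr m) = [set u].
Proof.
move=> Hm; apply/setP => w; rewrite !inE; apply/existsP/eqP.
  by case=> a /andP[/eqP Ha /eqP <-]; rewrite (@rigid _ _ Hm Ha).
by move=> ->; exists 1; rewrite relabel1 perm1 !eqxx.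
Qed.

Lemma VN_Gr n m (Phi : graph n -> graph m -> {set 'I_n} -> {perm 'I_m}) :
  VN_scheme Phi -> (6 <= m)%N -> forall g1 Vs (s o : {perm 'I_m}) w,
  Phi g1 (relabel o (relabel s (Gr m))) Vs (o w) = Phi g1 (Gr m) Vs (s^-1 w).
Proof.
move=> HV Hm g1 Vs s o w.
have := HV g1 (Gr m) Vs (s^-1 w) (s * o) 1.
rewrite orbit_Gr // !imset_set1 relabel1 perm1 => /set1_inj.
by rewrite relabelM permM permKV.
Qed.

Lemma hPhi_Gr n m (Phi : graph n -> graph m -> {set 'I_n} -> {perm 'I_m}) k
  (Hnm : (n <= m)%N) : VN_scheme Phi -> (6 <= m)%N -> forall g1 Vs s o,
  hPhi Phi k g1 (relabel s (Gr m)) o Vs =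
  #|[set v in Vs | ((Phi g1 (Gr m) Vs (s^-1 (widen_ord Hnm v))).+1 <= k)%N]|.
Proof.
move=> HV Hm g1 Vs s o; apply: eq_card => v; rewrite !inE; congr (_ && _).
apply/existsP/idP.
  case=> w /andP[/eqP Hw]; rewrite VN_Gr //.
  by have -> : w = widen_ord Hnm v by apply: val_inj.
by move=> H; exists (widen_ord Hnm v); rewrite eqxx /= VN_Gr.
Qed.

Lemma pigeon m n k (r : {perm 'I_m}) : (n + k < m)%N ->
  exists y : 'I_m, (n <= y)%N && (k <= r y)%N.
Proof.
move=> Hm.
suff: [exists y : 'I_m, (n <= y)%N && (k <= r y)%N] by case/existsP=> y; exists y.
apply: contraT => /existsPn H.
have Hsub : [set: 'I_m] \subset [set y : 'I_m | (y : nat) \in iota 0 n] :|: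
     r @^-1: [set p : 'I_m | (p : nat) \in iota 0 k].
  apply/subsetP => y _; rewrite !inE !mem_iota /=; have := H y; lia.
have := subset_leq_card Hsub; rewrite cardsT card_ord => Hc.
have HA : (#|[set y : 'I_m | (y : nat) \in iota 0 n]| <= n)%N.
  by have := card_val_in m (iota 0 n); rewrite size_iota.
have HB : (#|[set y : 'I_m | (y : nat) \in iota 0 k]| <= k)%N.
  by have := card_val_in m (iota 0 k); rewrite size_iota.
have E := cardsUI [set y : 'I_m | (y : nat) \in iota 0 n]
     (r @^-1: [set p : 'I_m | (p : nat) \in iota 0 k]).
rewrite (card_preimset _ (@perm_inj _ r)) in E.
have : (m <= n + k)%N.
  apply: leq_trans Hc _; apply: leq_trans (leq_addr #|[set y : 'I_m | (y : nat) \in iota 0 n] :&: r @^-1: [set p : 'I_m | (p : nat) \in iota 0 k]| _) _.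
  apply: (leq_trans (eq_leq E)).
  exact: leq_add HA HB.
lia.
Qed.

Lemma exists_swap n m k (Hnm : (n <= m)%N) (r : {perm 'I_m}) (Vs : {set 'I_n}) :
  (n + k < m)%N -> (0 < k)%N -> Vs != set0 ->
  exists s : {perm 'I_m},
    #|[set v in Vs | ((r (s^-1 (widen_ord Hnm v))).+1 <= k)%N]| !=
    #|[set v in Vs | ((r ((1 : {perm 'I_m})^-1 (widen_ord Hnm v))).+1 <= k)%N]|.
Proof.
move=> Hm Hk HVs; rewrite invg1.
set e := widen_ord Hnm.
case: (boolP [exists v in Vs, ((r (e v)).+1 <= k)%N]).
  case/existsP => v0 /andP[v0in Hv0].
  have [y /andP[Hy1 Hy2]] := @pigeon _ _ _ r Hm.
  exists (tperm (e v0) y); rewrite tpermV.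
  rewrite neq_ltn; apply/orP; left; apply: proper_card; apply/properP; split.
    apply/subsetP => v; rewrite !inE perm1 => /andP[-> /=].
    have Hey : y != e v by apply/eqP => E; move: Hy1; rewrite E /=; move: (ltn_ord v); lia.
    case: (eqVneq (e v0) (e v)) => [<-|Hne]; first by rewrite tpermL; lia.
    by rewrite tpermD.
  by exists v0; rewrite !inE v0in /=; [rewrite perm1 | rewrite tpermL; lia].
move=> Hno.
have [v1 v1in] := set0Pn _ HVs.
have Hm0 : (0 < m)%N by lia.
set y := r^-1 (Ordinal Hm0).
exists (tperm (e v1) y); rewrite tpermV.
have -> : [set v in Vs | ((r ((1%g : {perm 'I_m}) (e v))).+1 <= k)%N] = set0.
  apply/setP => v; rewrite !inE perm1; apply/negbTE; apply: contra Hno => Hv.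
  by apply/existsP; exists v.
rewrite cards0 -lt0n card_gt0; apply/set0Pn; exists v1.
by rewrite !inE v1in tpermL /y permKV.
Qed.

End P3.

Local Open Scope ring_scope.

Definition delta (R : realType) {X : finType} (x0 : X) : {ffun X -> R} :=
  [ffun x => (x == x0)%:R].

Lemma sum_delta (R : realType) (X : finType) (x0 : X) (p : X -> bool) :
  \sum_(x | p x) delta R x0 x = (p x0)%:R.
Proof.
case: (boolP (p x0)) => H.
  rewrite (bigD1 x0) //= big1 ?ffunE ?eqxx ?addr0 //.
  by move=> x /andP[_ Hx]; rewrite ffunE (negbTE Hx).
rewrite big1 // => x Hx; rewrite ffunE; case: eqP => // E.
by move: H; rewrite -E Hx.

Qed.

Lemma law_delta (R : realType) (X : finType) (Y : eqType) (f : X -> Y) x0 y :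
  law (delta R x0) f y = (f x0 == y)%:R.
Proof. exact: sum_delta. Qed.

Lemma law_delta_eq (R : realType) (X : finType) (Y : eqType) (f : X -> Y) x0 x1 :
  f x0 = f x1 -> law (delta R x0) f =1 law (delta R x1) f.
Proof. by move=> E y; rewrite !law_delta E. Qed.

Lemma dTV_delta (R : realType) (X : finType) (Y : eqType) (f : X -> Y) x0 x1 :
  f x0 != f x1 -> 0 < dTV (delta R x0) f (delta R x1) f.
Proof.
move=> Hne; rewrite /dTV; apply: mulr_gt0; first by rewrite invr_gt0 ltr0n.
rewrite (bigD1_seq (f x0)) /=; last exact: undup_uniq.
  rewrite !law_delta eqxx eq_sym (negbTE Hne) subr0 normr1.
  apply: (@lt_le_trans _ _ 1); first exact: ltr01.
  by rewrite lerDl; apply: sumr_ge0 => y _; exact: normr_ge0.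
by rewrite mem_undup mem_cat map_f ?mem_enum.
Qed.

Lemma nested_delta (R : realType) (m : nat -> nat)
  (x0 : forall n, graph n * graph (m n)) :
  (forall n, (n <= m n)%N) -> (forall n, (m n <= m n.+1)%N) ->
  nested_nominatable (fun n => n) (fun n (i : 'I_(m n)) => (i : nat))
    (fun n => delta R (x0 n)).
Proof.
move=> Hnm Hmono; split.
  move=> n; split.
  - by split.
  - exact: val_inj.
  - by [].
  - split; first by [].
    split; first by move=> x; rewrite ffunE ler0n.
    by rewrite (sum_delta _ _ _ (fun _ => true)).
  - move=> A B; rewrite !sum_delta.
    by case: (_ == A); case: (_ == B); rewrite ?mul1r ?mul0r.
exists 0%N => n _; split; first exact: leqnSn.
by move=> i; exists (widen_ord (Hmono n) i).
Qed.

Lemma empty_graph n : is_graph (set0 : {set 'I_n * 'I_n}).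
Proof.
apply/andP; split; first by apply/forallP => i; apply/forallP => j; rewrite !inE.
by apply/forallP => i; rewrite inE.
Qed.

Theorem lemma1 (R : realType) (T : eqType) (k : nat -> nat)
  (Vs : forall n, {set 'I_n})
  (Phi : forall n m, graph n -> graph m -> {set 'I_n} -> {perm 'I_m})
  (hhat : forall n m, graph n -> graph m -> {set 'I_n} -> T) :
  (forall n, (k n <= k n.+1)%N) ->
  (exists N, forall n, (N <= n)%N -> (0 < k n)%N /\ Vs n != set0) ->
  (forall n m, VN_scheme (Phi n m)) ->
  (forall n m, label_agnostic (hhat n m)) ->
  exists (m c c' : nat -> nat) (lab lab' : forall n, 'I_(m n) -> nat)
         (P P' : forall n, {ffun graph n * graph (m n) -> R}),
    [/\ nested_nominatable c lab P,
        nested_nominatable c' lab' P',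
        (forall n, Vs n \subset core n (c n)),
        (forall n, Vs n \subset core n (c' n)) &
        exists N, forall n, (N <= n)%N -> forall o : {perm 'I_(m n)},
          0 < dTV (P n) (fun x => hPhi (Phi n (m n)) (k n) x.1 x.2 o (Vs n))
                  (P' n) (fun x => hPhi (Phi n (m n)) (k n) x.1 x.2 o (Vs n))
          /\ law (P n) (fun x => hhat n (m n) x.1 (relabel o x.2) (Vs n))
             =1 law (P' n) (fun x => hhat n (m n) x.1 (relabel o x.2) (Vs n))].
Proof.
move=> Hk [N HN] HVN Hag.
pose m := fun n => (n + k n + 5).+1.
have Hnm n : (n <= m n)%N by rewrite /m; lia.
have Hmono n : (m n <= m n.+1)%N by rewrite /m; have := Hk n; lia.
pose g1 n : graph n := exist _ set0 (empty_graph n).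
pose G n := Gr (m n).
pose cnt n (s : {perm 'I_(m n)}) :=
  hPhi (Phi n (m n)) (k n) (g1 n) (relabel s (G n)) 1%g (Vs n).
pose sn n := odflt 1%g [pick s | cnt n s != cnt n 1%g].
exists m, (fun n => n), (fun n => n), (fun n (i : 'I_(m n)) => (i : nat)),
  (fun n (i : 'I_(m n)) => (i : nat)),
  (fun n => delta R (g1 n, relabel 1%g (G n))),
  (fun n => delta R (g1 n, relabel (sn n) (G n))).
split.
- exact: nested_delta.
- exact: nested_delta.
- by move=> n; apply/subsetP => v _; rewrite inE ltn_ord.
- by move=> n; apply/subsetP => v _; rewrite inE ltn_ord.
exists N => n HnN o.
have [Hk0 HVs0] := HN n HnN.
have Hm6 : (6 <= m n)%N by rewrite /m; lia.
have Hlt : (n + k n < m n)%N by rewrite /m; lia.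
have key s : hPhi (Phi n (m n)) (k n) (g1 n) (relabel s (G n)) o (Vs n) = cnt n s.
  by rewrite /cnt !(@hPhi_Gr n (m n) (Phi n (m n)) (k n) (Hnm n) (HVN n (m n)) Hm6).
have Hsn : cnt n (sn n) != cnt n 1%g.
  rewrite /sn; case: pickP => [s Hs // | Hnone].
  have [s Hs] := @exists_swap n (m n) (k n) (Hnm n) (Phi n (m n) (g1 n) (G n) (Vs n)) (Vs n) Hlt Hk0 HVs0.
  exfalso; move: (Hnone s); rewrite /cnt !(@hPhi_Gr n (m n) (Phi n (m n)) (k n) (Hnm n) (HVN n (m n)) Hm6).
  by rewrite Hs.
split.
  apply: dTV_delta; move: Hsn; rewrite -!key eq_sym; exact.
apply: law_delta_eq.
apply: (Hag n (m n) (g1 n) (relabel 1%g (G n)) (relabel (sn n) (G n)) (Vs n) o).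
by exists (sn n); rewrite relabelM mul1g.
Qed.
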